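(* Let $f(X)=X-\frac{1}{X}$. There are infinitely many pairs of positive rational numbers $(x,y)$ such that $f(x)\,f(y)=f(4)^2$. *)

(* Defs.v *)
From HB Require Import structures.
From mathcomp Require Import all_boot all_order all_algebra.
Set Implicit Arguments. Unset Strict Implicit. Unset Printing Implicit Defensive.
Import Order.TTheory GRing.Theory Num.Theory.
Local Open Scope ring_scope.

Definition f (x : rat) : rat := x - x^-1.

Definition is_sol (p : rat * rat) : Prop :=
  0 < p.1 /\ 0 < p.2 /\ f p.1 * f p.2 = f 4 ^+ 2.

(* Main.v *)
Require Import Defs.
From HB Require Import structures.
From mathcomp Require Import all_boot all_order all_algebra.
From mathcomp Require Import ssrZ zify ring lra.
From Stdlib Require Import ZArith.
Import Order.TTheory GRing.Theory Num.Theory.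
Set Implicit Arguments. Unset Strict Implicit.

Module ZP.
Local Open Scope Z_scope.

Definition cc : Z := 207360000.

Definition step (t : Z * Z * Z * Z) : Z * Z * Z * Z :=
  let '(P, Q, R, Sv) := t in
  (Z.abs (P*P*P*P - cc*(Q*Q*Q*Q)), 2*P*Q*R*Sv,
   P*P*P*P + 8192*(P*P)*(Q*Q) + cc*(Q*Q*Q*Q),
   P*P*P*P + 101250*(P*P)*(Q*Q) + cc*(Q*Q*Q*Q)).

Definition Inv (t : Z * Z * Z * Z) (k : nat) : Prop :=
  let '(P, Q, R, Sv) := t in
  0 < P /\ 0 < Q /\ 0 < R /\ 0 < Sv /\
  R*R = P*P + 4096*(Q*Q) /\ Sv*Sv = P*P + 50625*(Q*Q) /\
  Z.odd P = true /\
  exists O, Z.odd O = true /\ Q = 2^(Z.of_nat k) * O /\ (1 <= k)%nat.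

Definition st0 : Z * Z * Z * Z :=
  (254585991920237203982961830625, 928626267768579864499508032,
   261431060798652065373331876577, 329348343334598874377492083425).

Lemma Inv0 : Inv st0 6.
Proof.
rewrite /Inv /st0.
do 7 (split; [vm_compute; reflexivity|]).
exists 14509785433884060382804813.
split; [vm_compute; reflexivity|]. split; [vm_compute; reflexivity|]. lia.
Qed.

Lemma odd_sq x : Z.odd (x*x) = Z.odd x.
Proof. rewrite Z.odd_mul; by case: (Z.odd x). Qed.

Lemma Inv_step t k : Inv t k -> Inv (step t) (S k).
Proof.
case: t => [[[P Q] R] Sv].
rewrite /Inv /step; cbv beta iota.
move=> [hP [hQ [hR [hS [eR [eS [oP [O [oO [eQ hk]]]]]]]]]].
have oQ : Z.odd Q = false.
  rewrite eQ Z.odd_mul Z.odd_pow; last lia. by [].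
have oR : Z.odd R = true.
  by rewrite -odd_sq eR Z.odd_add !Z.odd_mul oP.
have oS : Z.odd Sv = true.
  by rewrite -odd_sq eS Z.odd_add !Z.odd_mul oP oQ.
have oX : Z.odd (P*P*P*P - cc*(Q*Q*Q*Q)) = true.
  by rewrite Z.odd_sub !Z.odd_mul oP.
have hP4 : 0 < P*P*P*P by nia.
have hPQ : 0 <= (P*P)*(Q*Q) by nia.
have hQ4 : 0 <= Q*Q*Q*Q by nia.
split.
  case: (Z.abs_spec (P*P*P*P - cc*(Q*Q*Q*Q))) => [[h1 ->]|[h1 ->]].
  - have : P*P*P*P - cc*(Q*Q*Q*Q) <> 0 by move=> h; rewrite h in oX.
    lia.
  - lia.
split; first by repeat apply: Z.mul_pos_pos.
have g1 : 0 <= 8192*(P*P)*(Q*Q) by apply: Z.mul_nonneg_nonneg; lia.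
have g2 : 0 <= 101250*(P*P)*(Q*Q) by apply: Z.mul_nonneg_nonneg; lia.
split; first by rewrite /cc; lia.
split; first by rewrite /cc; lia.
have eA : Z.abs (P*P*P*P - cc*(Q*Q*Q*Q)) * Z.abs (P*P*P*P - cc*(Q*Q*Q*Q))
   = (P*P*P*P - cc*(Q*Q*Q*Q)) * (P*P*P*P - cc*(Q*Q*Q*Q)).
  by rewrite Z.abs_square.
have eQ2 : 2*P*Q*R*Sv*(2*P*Q*R*Sv) = 4*(P*P)*(Q*Q)*(R*R)*(Sv*Sv) by ring.
split.
  rewrite eA eQ2 eR eS /cc; ring.
split.
  rewrite eA eQ2 eR eS /cc; ring.
split.
  case: (Z.abs_spec (P*P*P*P - cc*(Q*Q*Q*Q))) => [[h1 ->]|[h1 ->]] //.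
  by rewrite Z.odd_opp.
exists (P*O*R*Sv); split.
  by rewrite !Z.odd_mul oP oO oR oS.
split; last lia.
rewrite Nat2Z.inj_succ Z.pow_succ_r; last lia.
rewrite eQ; ring.
Qed.

Definition seqt (n : nat) := Nat.iter n step st0.

Lemma Inv_seqt n : Inv (seqt n) (6 + n).
Proof.
elim: n => [|n IH]; first exact: Inv0.
rewrite addnS; exact: (@Inv_step _ _ IH).
Qed.

Lemma distinct P1 Q1 R1 S1 P2 Q2 R2 S2 k1 k2 :
  Inv (P1, Q1, R1, S1) k1 -> Inv (P2, Q2, R2, S2) k2 -> (k1 < k2)%nat ->
  P1 * Q2 <> P2 * Q1.
Proof.
move=> [_ [_ [_ [_ [_ [_ [o1 [O1 [oO1 [e1 _]]]]]]]]]].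
move=> [_ [_ [_ [_ [_ [_ [o2 [O2 [oO2 [e2 _]]]]]]]]]] hk.
have hk' : (Z.of_nat k2 = Z.of_nat k1 + (Z.of_nat k2 - Z.of_nat k1))%Z by lia.
rewrite e1 e2 hk' Z.pow_add_r; [|lia|lia].
move=> h.
have h2 : 2^(Z.of_nat k1) * (P1 * 2^(Z.of_nat k2 - Z.of_nat k1) * O2)
        = 2^(Z.of_nat k1) * (P2 * O1).
  transitivity (P1 * (2 ^ Z.of_nat k1 * 2 ^ (Z.of_nat k2 - Z.of_nat k1) * O2)); first ring.
  rewrite h; ring.
apply Z.mul_reg_l in h2; last first.
  apply: Z.pow_nonzero; lia.
have : Z.odd (P1 * 2 ^ (Z.of_nat k2 - Z.of_nat k1) * O2) = false.
  rewrite !Z.odd_mul Z.odd_pow; last lia. by rewrite andbF andFb.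
by rewrite h2 Z.odd_mul o2 oO1.
Qed.

End ZP.
Import ZP.

Local Open Scope ring_scope.

Definition phi (z : Z) : rat := (int_of_Z z)%:~R.

Lemma phiM a b : phi (a*b)%Z = phi a * phi b.
Proof. by rewrite /phi rmorphM intrM. Qed.
Lemma phiD a b : phi (a+b)%Z = phi a + phi b.
Proof. by rewrite /phi rmorphD intrD. Qed.
Lemma phi_gt0 a : (0 < a)%Z -> 0 < phi a.
Proof. move=> h; rewrite /phi ltr0z; lia. Qed.
Lemma phi64 : phi 64%Z = 64.
Proof. reflexivity. Qed.
Lemma phi225 : phi 225%Z = 225.
Proof. reflexivity. Qed.
Lemma phi_inj : injective phi.
Proof. by move=> a b /intr_inj /(can_inj int_of_ZK). Qed.

Lemma inv_eq (x z : rat) : x * z = 1 -> x^-1 = z.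
Proof.
move=> h; have hx : x != 0 by apply/eqP=> hx; move: h; rewrite hx mul0r.
by rewrite -[x^-1]mulr1 -h mulrA mulVf // mul1r.
Qed.

Lemma fx_gen (p q r : rat) : q != 0 -> r * r = p * p + 64 * 64 * (q * q) ->
  f ((p+r)/(64*q)) = p/(32*q).
Proof.
move=> q0 e.
rewrite /f (@inv_eq ((p+r)/(64*q)) ((r-p)/(64*q))).
  field; by rewrite q0.
have -> : (p+r)/(64*q) * ((r-p)/(64*q)) = (r * r - p * p) / (64 * 64 * (q * q)).
  field; by rewrite q0.
rewrite e. field; by rewrite q0.
Qed.
Lemma fy_gen (p q s : rat) : p != 0 -> s * s = p * p + 225 * 225 * (q * q) ->
  f ((225 * q + s) / p) = 450 * q / p.
Proof.
move=> p0 e.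
rewrite /f (@inv_eq ((225 * q + s) / p) ((s - 225 * q) / p)).
  field; by rewrite p0.
have -> : (225 * q + s) / p * ((s - 225 * q) / p) = (s * s - 225 * 225 * (q * q)) / (p * p).
  field; by rewrite p0.
rewrite e. field; by rewrite p0.
Qed.
Lemma f4 : f 4 ^+ 2 = 225 / 16.
Proof. by rewrite /f; field. Qed.
Lemma prod_gen (p q : rat) : p != 0 -> q != 0 -> p / (32 * q) * (450 * q / p) = 225 / 16.
Proof. move=> p0 q0. field; by rewrite p0 q0. Qed.

Definition pt (t : Z * Z * Z * Z) : rat * rat :=
  let '(P, Q, R, Sv) := t in
  ((phi P + phi R) / (64 * phi Q), (225 * phi Q + phi Sv) / phi P).

Lemma f_pt1 P Q R Sv k : Inv (P, Q, R, Sv) k ->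
  f (pt (P, Q, R, Sv)).1 = phi P / (32 * phi Q).
Proof.
move=> [hP [hQ [hR [hS [eR _]]]]].
have q0 := phi_gt0 hQ.
have e4 : (4096 = 64 * 64)%Z by [].
rewrite e4 in eR.
move/(congr1 phi): eR; rewrite phiD !phiM phi64 => eR'.
apply: fx_gen => //; by rewrite gt_eqF.
Qed.

Lemma f_pt2 P Q R Sv k : Inv (P, Q, R, Sv) k ->
  f (pt (P, Q, R, Sv)).2 = 450 * phi Q / phi P.
Proof.
move=> [hP [hQ [hR [hS [_ [eS _]]]]]].
have p0 := phi_gt0 hP.
have e5 : (50625 = 225 * 225)%Z by [].
rewrite e5 in eS.
move/(congr1 phi): eS; rewrite phiD !phiM phi225 => eS'.
apply: fy_gen => //; by rewrite gt_eqF.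
Qed.

Lemma sol_pt t k : Inv t k -> is_sol (pt t).
Proof.
case: t => [[[P Q] R] Sv] hI.
have hI' := hI.
move: hI' => [hP [hQ [hR [hS _]]]].
have p0 := phi_gt0 hP; have q0 := phi_gt0 hQ; have r0 := phi_gt0 hR.
have s0 := phi_gt0 hS.
have h64 : (0 : rat) < 64 by [].
have h225 : (0 : rat) < 225 by [].
split.
  change (0 < (phi P + phi R) / (64 * phi Q)).
  apply: divr_gt0; [exact: addr_gt0 | exact: mulr_gt0].
split.
  change (0 < (225 * phi Q + phi Sv) / phi P).
  apply: divr_gt0; [apply: addr_gt0; [exact: mulr_gt0 | exact: s0] | exact: p0].
rewrite (f_pt1 hI).
rewrite (f_pt2 hI).
rewrite f4.
apply: prod_gen; exact: lt0r_neq0.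
Qed.

Lemma cross (a b c d : rat) : b != 0 -> d != 0 -> a / (32 * b) = c / (32 * d) ->
  a * d = c * b.
Proof.
move=> hb hd h.
have e1 : a * d = a / (32 * b) * (32 * b * d).
  field; by rewrite hb.
have e2 : c * b = c / (32 * d) * (32 * b * d).
  field; by rewrite hd.
by rewrite e1 e2 h.
Qed.

Lemma pt_inj : injective (fun n => pt (seqt n)).
Proof.
move=> i j /= hij; apply/eqP; apply/negPn/negP => hne.
wlog hlt : i j hij hne / (i < j)%nat.
  move=> H; case: (ltngtP i j) => h.
  - exact: (H i j).
  - by apply: (H j i) => //; rewrite eq_sym.
  - by move: hne; rewrite h eqxx.
have Ii := Inv_seqt i; have Ij := Inv_seqt j.
move: hij Ii Ij.
case: (seqt i) => [[[P1 Q1] R1] S1]; case: (seqt j) => [[[P2 Q2] R2] S2].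
move=> hij Ii Ij.
have hf : f (pt (P1, Q1, R1, S1)).1 = f (pt (P2, Q2, R2, S2)).1 by rewrite hij.
rewrite (f_pt1 Ii) (f_pt1 Ij) in hf.
move: Ii Ij => Ii Ij.
have Ii' := Ii; have Ij' := Ij.
move: Ii' Ij' => [_ [hQ1 _]] [_ [hQ2 _]].
have q1 := phi_gt0 hQ1; have q2 := phi_gt0 hQ2.
have : phi (P1 * Q2)%Z = phi (P2 * Q1)%Z.
  rewrite !phiM.
  apply: cross hf; exact: lt0r_neq0.
move/phi_inj; apply: (distinct Ii Ij); lia.
Qed.

Theorem mainTheorem9 :
  forall s : seq (rat * rat), exists p : rat * rat, is_sol p /\ p \notin s.
Proof.
move=> s.
set L := map (fun n => pt (seqt n)) (iota 0 (size s).+1).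
have uL : uniq L by rewrite map_inj_uniq ?iota_uniq //; exact: pt_inj.
case: (boolP (all (mem s) L)) => hall.
  have : (size L <= size s)%nat.
    apply: uniq_leq_size => // x hx; exact: (allP hall x hx).
  by rewrite size_map size_iota ltnn.
case/allPn: hall => x /mapP [n _ ->] hn.
exists (pt (seqt n)); split; last by [].
exact: (sol_pt (Inv_seqt n)).
Qed.
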